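(* Let $p^{\mathcal S}(c,x)$ and $p^{\mathcal T}(c,x)$ be the data distributions of the source and target tasks. Define $$D^{ST}_{\mathrm{trace}}=2\sup_{\theta\in\Theta}\bigl|\mathcal R^{\mathcal S}_{\theta}-\mathcal R^{\mathcal T}_{\theta}\bigr|,$$ $$D^{ST}_{\mathrm{TV}}=2\,\mathrm{TV}(p^{\mathcal T}_c,p^{\mathcal S}_c)+2\,\mathbb E_{c\sim p^{\mathcal S}_c}\bigl[\mathrm{TV}\bigl(p^{\mathcal T}(\cdot|c),p^{\mathcal S}(\cdot|c)\bigr)\bigr].$$ Then both $D^{ST}=D^{ST}_{\mathrm{trace}}$ and $D^{ST}=D^{ST}_{\mathrm{TV}}$ satisfy the dissimilarity inequality $$d^{\mathcal T}(\theta,\theta^{\mathcal T}_* )\le d^{\mathcal S}(\theta,\theta^{\mathcal S}_* )+D^{ST}\quad\text{for all }\theta\in\Theta,$$ i.e. the tasks are $D^{ST}$-dissimilar for either choice. Moreover, $D^{ST}_{\mathrm{trace}}\le D^{ST}_{\mathrm{TV}}$.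
   Context: Setting: $\mathcal X$ is a finite set of classical inputs, labels are $c\in\{0,1\}$. $\Theta$ is an arbitrary set of embedding parameters and, for each $\theta\in\Theta$ and $x\in\mathcal X$, $\rho_\theta(x)$ is a density matrix (positive semidefinite, unit trace) on $\mathbb C^n$. $\mathcal M$ is the set of binary POVMs $M=(M_0,M_1)$ with $M_0,M_1\succeq0$ and $M_0+M_1=I$. The loss is $\ell_{\theta,M}(c,x)=1-\mathrm{Tr}(M_c\rho_\theta(x))$. For a task $\mathcal A\in\{\mathcal S,\mathcal T\}$ with joint distribution $p^{\mathcal A}(c,x)$ on $\{0,1\}\times\mathcal X$ (label marginal $p^{\mathcal A}_c$, input marginal $p^{\mathcal A}(x)$, conditionals $p^{\mathcal A}(x|c)$), the expected risk is $\mathcal R^{\mathcal A}_{\theta,M}=\mathbb E_{p^{\mathcal A}(c,x)}[\ell_{\theta,M}(c,x)]$ and $\mathcal R^{\mathcal A}_\theta=\min_{M\in\mathcal M}\mathcal R^{\mathcal A}_{\theta,M}$. Assume $\theta^{\mathcal A}_*\in\arg\min_{\theta\in\Theta}\mathcal R^{\mathcal A}_\theta$ exists. The task-based distance is $d^{\mathcal A}(\theta,\theta')=|\mathcal R^{\mathcal A}_{\theta'}-\mathcal R^{\mathcal A}_\theta|$. $\mathrm{TV}(p,q)=\tfrac12\sum_x|p(x)-q(x)|$ is the total variation distance. *)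

(* Defs.v *)
From HB Require Import structures.
From mathcomp Require Import all_boot all_order all_algebra.
From mathcomp Require Import complex.
From mathcomp Require Import boolp classical_sets reals.
Set Implicit Arguments. Unset Strict Implicit. Unset Printing Implicit Defensive.
Import Order.TTheory GRing.Theory Num.Theory.
Local Open Scope ring_scope.
Local Open Scope classical_set_scope.

Section QuantumTasks.
Variable R : realType.
Variable n : nat.
Variable X : finType.

Definition adjmx (m k : nat) (A : 'M[R[i]]_(m, k)) : 'M[R[i]]_(k, m) :=
  (map_mx (@conjc R) A)^T.

(* positive semidefinite: v^* A v >= 0 (in the order of C, i.e. real and >= 0) *)
Definition psd (A : 'M[R[i]]_n) : Prop :=
  forall v : 'cV[R[i]]_n, 0 <= (adjmx v *m A *m v) 0 0.

Definition density (rho : 'M[R[i]]_n) : Prop := psd rho /\ \tr rho = 1.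

(* binary POVM M = (M false, M true) = (M_0, M_1) *)
Definition povm (M : bool -> 'M[R[i]]_n) : Prop :=
  psd (M false) /\ psd (M true) /\ M false + M true = 1%:M.

(* loss l_{theta,M}(c,x) = 1 - Tr(M_c rho_theta(x)) (the trace is real for PSD
   arguments; we take its real part) *)
Definition loss (rho : X -> 'M[R[i]]_n) (M : bool -> 'M[R[i]]_n) (c : bool) (x : X) : R :=
  1 - complex.Re (\tr (M c *m rho x)).

Definition is_dist (p : bool -> X -> R) : Prop :=
  (forall c x, 0 <= p c x) /\ \sum_(c : bool) \sum_(x : X) p c x = 1.

Definition riskM (p : bool -> X -> R) (rho : X -> 'M[R[i]]_n) (M : bool -> 'M[R[i]]_n) : R :=
  \sum_(c : bool) \sum_(x : X) p c x * loss rho M c x.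

(* R_theta = min over POVMs (written as the infimum, which is attained) *)
Definition risk (p : bool -> X -> R) (rho : X -> 'M[R[i]]_n) : R :=
  inf [set r | exists M, povm M /\ r = riskM p rho M].

(* label marginal and conditional p(x|c) = p(c,x)/p_c(c) (0 if p_c(c) = 0) *)
Definition marg (p : bool -> X -> R) (c : bool) : R := \sum_(x : X) p c x.
Definition cond (p : bool -> X -> R) (c : bool) (x : X) : R := p c x / marg p c.

Definition TV (T : finType) (f g : T -> R) : R := 2^-1 * \sum_(t : T) `|f t - g t|.

Definition task_dist {Theta : Type} (p : bool -> X -> R)
  (rho : Theta -> X -> 'M[R[i]]_n) (th th' : Theta) : R :=
  `|risk p (rho th') - risk p (rho th)|.

Definition D_trace {Theta : Type} (pS pT : bool -> X -> R)
  (rho : Theta -> X -> 'M[R[i]]_n) : R :=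
  2 * sup [set r | exists th : Theta, r = `|risk pS (rho th) - risk pT (rho th)|].

Definition D_TV (pS pT : bool -> X -> R) : R :=
  2 * TV (marg pT) (marg pS) +
  2 * \sum_(c : bool) marg pS c * TV (cond pT c) (cond pS c).

(* the tasks are D-dissimilar (thS, thT are the optimal parameters) *)
Definition dissimilar {Theta : Type} (pS pT : bool -> X -> R)
  (rho : Theta -> X -> 'M[R[i]]_n) (thS thT : Theta) (D : R) : Prop :=
  forall th : Theta, task_dist pT rho th thT <= task_dist pS rho th thS + D.

End QuantumTasks.

(* Main.v *)
Require Import Defs.
From HB Require Import structures.
From mathcomp Require Import all_boot all_order all_algebra.
From mathcomp Require Import complex.
From mathcomp Require Import boolp classical_sets reals.
From mathcomp Require Import spectral sesquilinear.
From mathcomp Require Import ring lra.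
Import Order.TTheory GRing.Theory Num.Theory.
Local Open Scope ring_scope.

Section Real.
Variable R : realType.

Lemma L1 (T : finType) (a b w : T -> R) :
  (forall t, 0 <= w t <= 1) -> \sum_t a t = \sum_t b t ->
  `|\sum_t (a t - b t) * w t| <= 2^-1 * \sum_t `|a t - b t|.
Proof.
move=> hw hab.
have -> : \sum_t (a t - b t) * w t = \sum_t (a t - b t) * (w t - 2^-1).
  under [RHS]eq_bigr do rewrite mulrBr.
  by rewrite sumrB -mulr_suml sumrB hab subrr mul0r subr0.
apply: (le_trans (ler_norm_sum _ _ _)).
rewrite mulr_sumr; apply: ler_sum => t _.
rewrite normrM mulrC ler_wpM2r //.
by rewrite ler_norml; have := hw t; lra.
Qed.

Lemma sum_div_mul (T : finType) (p l : T -> R) :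
  (forall t, 0 <= p t) ->
  (\sum_t p t) * \sum_t (p t / (\sum_u p u) * l t) = \sum_t p t * l t.
Proof.
move=> hp; set m := \sum_u p u.
have [m0|m0] := eqVneq m 0.
  have p0 : forall t, p t = 0.
    by move=> t; apply: (psumr_eq0P (P := predT)) => //; exact: m0.
  by rewrite m0 mul0r; apply/esym/big1 => t _; rewrite p0 mul0r.
rewrite mulr_sumr; apply: eq_bigr => t _.
by rewrite mulrA [m * _]mulrC divfK.
Qed.

Lemma sum_div_01 (T : finType) (p l : T -> R) :
  (forall t, 0 <= p t) -> (forall t, 0 <= l t <= 1) ->
  0 <= \sum_t (p t / (\sum_u p u) * l t) <= 1.
Proof.
move=> hp hl; set m := \sum_u p u.
have m0 : 0 <= m by apply: sumr_ge0.
apply/andP; split.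
  apply: sumr_ge0 => t _; apply: mulr_ge0; first exact: divr_ge0.
  by have /andP[] := hl t.
apply: (@le_trans _ _ (\sum_t p t / m)).
  apply: ler_sum => t _; rewrite -[leRHS]mulr1 ler_wpM2l ?divr_ge0 //.
  by have /andP[] := hl t.
rewrite -mulr_suml -/m.
have [->|mn0] := eqVneq m 0; first by rewrite mul0r.
by rewrite divff.
Qed.

Lemma sum_div_1 (T : finType) (p : T -> R) :
  \sum_u p u != 0 -> \sum_t p t / \sum_u p u = 1.
Proof. by move=> h; rewrite -mulr_suml divff. Qed.

End Real.

Section Real2.
Variable R : realType.
Variable X : finType.

Lemma per_c (pS pT : bool -> X -> R) (l : bool -> X -> R) c :
  (forall x, 0 <= pS c x) -> (forall x, 0 <= pT c x) ->
  (forall x, 0 <= l c x <= 1) ->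
  `|\sum_x pS c x * l c x - \sum_x pT c x * l c x - (marg pS c - marg pT c) *
     (if marg pT c == 0 then \sum_x (cond pS c x * l c x)
           else \sum_x (cond pT c x * l c x))|
    <= marg pS c * TV (cond pT c) (cond pS c).
Proof.
move=> hS hT hl.
have eS : \sum_x pS c x * l c x = marg pS c * \sum_x (cond pS c x * l c x).
  by rewrite /cond /marg (sum_div_mul _ _ _ (l c) hS).
have eT : \sum_x pT c x * l c x = marg pT c * \sum_x (cond pT c x * l c x).
  by rewrite /cond /marg (sum_div_mul _ _ _ (l c) hT).
have mS0 : 0 <= marg pS c by apply: sumr_ge0.
have TV0 : 0 <= TV (cond pT c) (cond pS c).
  rewrite /TV; apply: mulr_ge0; [by rewrite invr_ge0 | by apply: sumr_ge0 => *].
rewrite eS eT.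
case: eqP => [->|mT0].
  by rewrite !mul0r subr0 subr0 subrr normr0 mulr_ge0.
set A := \sum_x _; set B := \sum_x _.
have -> : marg pS c * A - marg pT c * B - (marg pS c - marg pT c) * B
          = marg pS c * (A - B) by ring.
rewrite normrM ger0_norm //.
have [mS|mSn0] := eqVneq (marg pS c) 0; first by rewrite mS !mul0r.
apply: ler_wpM2l => //.
rewrite /A /B -sumrB.
under eq_bigr do rewrite -mulrBl.
rewrite /TV.
under [Y in _ <= _ * Y]eq_bigr do rewrite distrC.
apply: L1 => //.
rewrite /cond !sum_div_1 //; by apply/eqP.
Qed.

Lemma bound_M (pS pT : bool -> X -> R) (l : bool -> X -> R) :
  is_dist pS -> is_dist pT -> (forall c x, 0 <= l c x <= 1) ->
  `|\sum_c \sum_x pS c x * l c x - \sum_c \sum_x pT c x * l c x|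
    <= TV (marg pT) (marg pS) + \sum_c marg pS c * TV (cond pT c) (cond pS c).
Proof.
move=> [hS sS] [hT sT] hl.
pose w c := if marg pT c == 0 then \sum_x (cond pS c x * l c x)
           else \sum_x (cond pT c x * l c x).
pose e c := \sum_x pS c x * l c x - \sum_x pT c x * l c x
            - (marg pS c - marg pT c) * w c.
have -> : \sum_c \sum_x pS c x * l c x - \sum_c \sum_x pT c x * l c x
   = \sum_c (marg pS c - marg pT c) * w c + \sum_c e c.
  rewrite -big_split -sumrB; apply: eq_bigr => c _; by rewrite /e /= addrC subrK.
apply: (le_trans (ler_normD _ _)); apply: lerD.
  rewrite /TV.
  under [Y in _ <= _ * Y]eq_bigr do rewrite distrC.
  apply: L1; last by rewrite /marg sS sT.
  move=> c; rewrite /w; case: eqP => _; apply: sum_div_01 => //.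
apply: (le_trans (ler_norm_sum _ _ _)); apply: ler_sum => c _.
exact: per_c.
Qed.
End Real2.

Section Q.
Set Implicit Arguments. Unset Strict Implicit.
Variable R : realType.
Variable n : nat.
Local Notation C := (R[i]).

Definition F (A : 'M[C]_n) (u v : 'cV[C]_n) : C := (adjmx u *m A *m v) 0 0.

Lemma adjmxD (u v : 'cV[C]_n) : adjmx (u + v) = adjmx u + adjmx v.
Proof. by apply/matrixP => a b; rewrite !mxE rmorphD. Qed.

Lemma adjmxZ (k : C) (u : 'cV[C]_n) : adjmx (k *: u) = k^* *: adjmx u.
Proof. by apply/matrixP => a b; rewrite !mxE rmorphM. Qed.

Lemma FDl A u1 u2 v : F A (u1 + u2) v = F A u1 v + F A u2 v.
Proof. by rewrite /F adjmxD !mulmxDl mxE. Qed.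

Lemma FDr A u v1 v2 : F A u (v1 + v2) = F A u v1 + F A u v2.
Proof. by rewrite /F !mulmxDr mxE. Qed.

Lemma FZl A k u v : F A (k *: u) v = k^* * F A u v.
Proof. by rewrite /F adjmxZ -!scalemxAl mxE. Qed.

Lemma FZr A k u v : F A u (k *: v) = k * F A u v.
Proof. by rewrite /F -!scalemxAr mxE. Qed.

Lemma polar A : (forall v, F A v v = 0) -> forall u v, F A u v = 0.
Proof.
move=> h u v.
have h1 := h (u + v); rewrite FDl !FDr !h add0r addr0 in h1.
have h2 := h (u + 'i *: v); rewrite FDl !FDr !FZl !FZr !h in h2.
rewrite add0r mulr0 mulr0 addr0 conjCi in h2.
have e : 'i * (F A u v - F A v u) = 0.
  by rewrite mulrBr -mulNr.
have : F A u v - F A v u = 0.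
  by move/eqP: e; rewrite mulf_eq0 (negbTE (neq0Ci _)) /= => /eqP.
move/eqP; rewrite subr_eq0 => /eqP e2.
move: h1; rewrite -e2 => /eqP; rewrite -mulr2n mulrn_eq0 /= => /eqP //.
Qed.

Lemma F_delta A i j : F A (delta_mx i 0) (delta_mx j 0) = A i j.
Proof.
rewrite /F.
have -> : adjmx (delta_mx i 0 : 'cV[C]_n) = delta_mx 0 i.
  apply/matrixP => a b; rewrite !mxE.
  by rewrite rmorph_nat andbC.
by rewrite -rowE -colE !mxE.
Qed.

Lemma F_adj A v : F (A ^t*)%sesqui v v = (F A v v)^*.
Proof.
rewrite /F.
have -> : (adjmx v *m A *m v) 0 0 = ((adjmx v *m A *m v)^T) 0 0 by rewrite [RHS]mxE.
rewrite !trmx_mul.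
have -> : ((v^T *m (A^T *m (adjmx v)^T)) 0 0)^* =
          (map_mx (@conjc R) (v^T *m (A^T *m (adjmx v)^T))) 0 0 by rewrite [RHS]mxE.
rewrite !map_mxM mulmxA; congr (fun M => M 0 0); congr (_ *m _ *m _).
- by apply/matrixP => a b; rewrite !mxE.
- by apply/matrixP => a b; rewrite !mxE /= conjcK.
Qed.

Lemma psd_herm (A : 'M[C]_n) : psd A -> (A ^t*)%sesqui = A.
Proof.
move=> hA; apply/esym/eqP; rewrite -subr_eq0; apply/eqP/matrixP => i j.
rewrite [RHS]mxE -F_delta; apply: polar => v.
rewrite /F mulmxBr mulmxBl mxE -/(F A v v) [X in _ + X]mxE -/(F _ v v) F_adj.
by rewrite conj_Creal ?subrr // ger0_real // hA.
Qed.

End Q.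

Section Q2.
Set Implicit Arguments. Unset Strict Implicit.
Variable R : realType.
Variable n : nat.
Local Notation C := (R[i]).

Lemma adjmx_tc m k (A : 'M[C]_(m, k)) : adjmx A = (A ^t*)%sesqui.
Proof. by apply/matrixP => a b; rewrite !mxE. Qed.

Lemma adjmx_mul m k l (A : 'M[C]_(m, k)) (B : 'M[C]_(k, l)) :
  adjmx (A *m B) = adjmx B *m adjmx A.
Proof.
apply/matrixP => a b; rewrite !mxE rmorph_sum; apply: eq_bigr => j _.
by rewrite !mxE rmorphM mulrC.
Qed.

Lemma adjmxK m k (A : 'M[C]_(m, k)) : adjmx (adjmx A) = A.
Proof. by apply/matrixP => a b; rewrite !mxE /= conjcK. Qed.

Lemma F_conj (A P : 'M[C]_n) u w :
  F (P *m A *m adjmx P) u w = F A (adjmx P *m u) (adjmx P *m w).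
Proof. by rewrite /F adjmx_mul adjmxK !mulmxA. Qed.

Lemma tr_psd (A B : 'M[C]_n) : psd A -> psd B -> 0 <= \tr (A *m B).
Proof.
move=> hA hB.
have hBh := psd_herm hB.
have nB : B \is normalmx by apply/normalmxP; rewrite hBh.
move/orthomx_spectralP: nB.
set P := spectralmx B; set d := spectral_diag B => eB.
have Pu : P \is unitarymx by apply: spectral_unitarymx.
have PP : P *m adjmx P = 1%:M by rewrite adjmx_tc; apply/unitarymxP.
rewrite invmx_unitary // -adjmx_tc in eB.
have hd : forall i, 0 <= d 0 i.
  move=> i.
  have -> : d 0 i = (P *m B *m adjmx P) i i.
    by rewrite eB !mulmxA PP mul1mx -mulmxA PP mulmx1 mxE eqxx mulr1n.
  by rewrite -F_delta F_conj; apply: hB.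
rewrite eB mulmxA mxtrace_mulC !mulmxA mul_mx_diag /mxtrace.
apply: sumr_ge0 => i _; rewrite mxE; apply: mulr_ge0 => //.
by rewrite -F_delta F_conj; apply: hA.
Qed.

End Q2.

Section Q3.
Set Implicit Arguments. Unset Strict Implicit.
Local Open Scope classical_set_scope.
Variable R : realType.
Variable n : nat.
Variable X : finType.
Local Notation C := (R[i]).

Lemma ReD (a b : C) : complex.Re (a + b) = complex.Re a + complex.Re b.
Proof. by case: a; case: b. Qed.

Lemma loss01 (rho : 'M[C]_n) (M : bool -> 'M[C]_n) c :
  density rho -> povm M -> 0 <= 1 - complex.Re (\tr (M c *m rho)) <= 1.
Proof.
move=> [hr tr1] [h0 [h1 hs]].
have g (b : bool) : 0 <= complex.Re (\tr (M b *m rho)).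
  have : 0 <= \tr (M b *m rho) by apply: tr_psd => //; case: b.
  by rewrite lecE => /andP[_].
have e : complex.Re (\tr (M false *m rho)) + complex.Re (\tr (M true *m rho)) = 1.
  by rewrite -ReD -mxtraceD -mulmxDl hs mul1mx tr1.
have := g false; have := g true.
by case: c; lra.
Qed.

Lemma psd1 : psd (1%:M : 'M[C]_n).
Proof.
move=> v; rewrite mulmx1 mxE; apply: sumr_ge0 => i _.
by rewrite !mxE mulrC; apply: mulcJ_ge0.
Qed.

Lemma psd0 : psd (0 : 'M[C]_n).
Proof. by move=> v; rewrite mulmx0 mul0mx mxE. Qed.

Lemma povm_ex : povm (fun c : bool => if c then 0 else (1%:M : 'M[C]_n)).
Proof. by split; [exact: psd1 | split; [exact: psd0 | rewrite addr0]]. Qed.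

Lemma inf_shift (T : Type) (P : T -> Prop) (f g : T -> R) (B : R) :
  (exists t, P t) -> (forall t, P t -> 0 <= f t) ->
  (forall t, P t -> f t <= g t + B) ->
  inf [set r | exists t, P t /\ r = f t] <= inf [set r | exists t, P t /\ r = g t] + B.
Proof.
move=> [t0 Pt0] hf hfg.
set SF := [set r | exists t, P t /\ r = f t].
set SG := [set r | exists t, P t /\ r = g t].
have lbF : has_lbound SF by exists 0 => r [t [Pt ->]]; apply: hf.
have iF := ge_inf lbF.
rewrite -lerBlDr; apply: lb_le_inf; first by exists (g t0), t0.
move=> r [t [Pt ->]]; rewrite lerBlDr.
apply: le_trans (hfg t Pt); apply: iF; by exists t.
Qed.

Lemma risk_bound (rho : X -> 'M[C]_n) (pS pT : bool -> X -> R) :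
  (forall x, density (rho x)) -> is_dist pS -> is_dist pT ->
  `|risk pS rho - risk pT rho| <=
    TV (marg pT) (marg pS) + \sum_c marg pS c * TV (cond pT c) (cond pS c).
Proof.
move=> hrho dS dT.
set Bd := TV _ _ + _.
have hl : forall M, povm M -> forall c x, 0 <= loss rho M c x <= 1.
  by move=> M hM c x; apply: loss01.
have hb : forall M, povm M -> `|riskM pS rho M - riskM pT rho M| <= Bd.
  by move=> M hM; apply: bound_M => //; apply: hl.
have nn : forall p, is_dist p -> forall M, povm M -> 0 <= riskM p rho M.
  move=> p [hp _] M hM; apply: sumr_ge0 => c _; apply: sumr_ge0 => x _.
  by apply: mulr_ge0 => //; have /andP[] := hl M hM c x.
have ex : exists M : bool -> 'M[C]_n, povm M := ex_intro _ _ povm_ex.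
have hA : risk pT rho <= risk pS rho + Bd.
  apply: inf_shift => //; first by apply: nn.
  move=> M hM; have := hb M hM; rewrite ler_norml => /andP[h1 h2]; lra.
have hB : risk pS rho <= risk pT rho + Bd.
  apply: inf_shift => //; first by apply: nn.
  move=> M hM; have := hb M hM; rewrite ler_norml => /andP[h1 h2]; lra.
rewrite ler_norml; apply/andP; split; lra.
Qed.
End Q3.

Unset Implicit Arguments. Set Strict Implicit.

Theorem theorem3p1 (R : realType) (n : nat) (X : finType) (Theta : Type)
  (rho : Theta -> X -> 'M[R[i]]_n) (pS pT : bool -> X -> R) (thS thT : Theta) :
  (forall th x, density (rho th x)) ->
  is_dist pS -> is_dist pT ->
  (forall th, risk pS (rho thS) <= risk pS (rho th)) ->
  (forall th, risk pT (rho thT) <= risk pT (rho th)) ->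
  [/\ dissimilar pS pT rho thS thT (D_trace pS pT rho),
      dissimilar pS pT rho thS thT (D_TV pS pT)
    & D_trace pS pT rho <= D_TV pS pT].
Proof.
move=> hrho dS dT oS oT.
set Bd := TV (marg pT) (marg pS) + \sum_c marg pS c * TV (cond pT c) (cond pS c).
have K : forall th, `|risk pS (rho th) - risk pT (rho th)| <= Bd.
  by move=> th; apply: risk_bound.
have eTV : D_TV pS pT = 2 * Bd by rewrite /D_TV /Bd mulrDr.
set S := [set r | exists th : Theta, r = `|risk pS (rho th) - risk pT (rho th)|]%classic.
have ubS : has_ubound S by exists Bd => r [th ->]; apply: K.
have neS : (S !=set0)%classic by exists `|risk pS (rho thS) - risk pT (rho thS)|, thS.
have hsup : forall th, `|risk pS (rho th) - risk pT (rho th)| <= sup S.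
  by move=> th; apply: ub_le_sup => //; exists th.
have hsB : sup S <= Bd by apply: ge_sup => // r [th ->]; apply: K.
have eTr : D_trace pS pT rho = 2 * sup S by [].
have diss : dissimilar pS pT rho thS thT (D_trace pS pT rho).
  move=> th; rewrite /task_dist eTr.
  have h1 := oS th; have h2 := oS thT; have h3 := oT th.
  move: h1 h2 h3 (hsup th) (hsup thT).
  generalize (risk pS (rho thS)) (risk pS (rho th)) (risk pS (rho thT))
    (risk pT (rho thT)) (risk pT (rho th)) (sup S) => a b c d e s.
  move=> h1 h2 h3 /ler_normlP [a1 a2] /ler_normlP [b1 b2].
  rewrite (distrC d) (distrC a) !ger0_norm ?subr_ge0 //; lra.
have le : D_trace pS pT rho <= D_TV pS pT by rewrite eTr eTV ler_wpM2l.
split => //.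
by move=> th; apply: le_trans (diss th) _; rewrite lerD2l.
Qed.
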